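(* Let $\mathcal{K}\subset\mathbb{R}^n$ be a compact convex set and let $\phi:\mathcal{K}\to\mathbb{R}$ be continuous. Then for every $\varepsilon>0$ there exist a positive integer $p$ and, with $T=1/p$, a function $f_T\in\mathrm{DLSE}_T$ with rational parameters such that $|f_T(\mathbf{x})-\phi(\mathbf{x})|\leqslant\varepsilon$ for all $\mathbf{x}\in\mathcal{K}$.
   Context: For $T>0$, $\mathrm{LSE}_T$ denotes the class of functions $f_T:\mathbb{R}^n\to\mathbb{R}$ of the form $$f_T(\mathbf{x})=T\log\Big(\sum_{k=1}^K \exp\big(\langle\boldsymbol{\alpha}^{(k)},\mathbf{x}\rangle/T+\beta_k/T\big)\Big)$$ for some positive integer $K$, vectors $\boldsymbol{\alpha}^{(k)}\in\mathbb{R}^n$ and real numbers $\beta_k$. Such a function has rational parameters if $T$ is rational and it can be written in this form with all entries of the $\boldsymbol{\alpha}^{(k)}$ and all $\beta_k$ rational. $\mathrm{DLSE}_T$ is the class of functions $g_T-h_T$ with $g_T,h_T\in\mathrm{LSE}_T$ (same $T$); such a function has rational parameters if $g_T$ and $h_T$ both have rational parameters. *)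

(* Defs.v *)
From HB Require Import structures.
From mathcomp Require Import all_boot all_order all_algebra.
From mathcomp Require Import all_classical all_reals all_analysis.
Set Implicit Arguments. Unset Strict Implicit. Unset Printing Implicit Defensive.
Import Order.TTheory GRing.Theory Num.Theory.
Import numFieldNormedType.Exports.
Local Open Scope classical_set_scope.
Local Open Scope ring_scope.

Definition convex_set_rV (R : realType) (n : nat) (S : set 'rV[R]_n) : Prop :=
  forall x y (t : R), S x -> S y -> 0 <= t -> t <= 1 ->
    S (t *: x + (1 - t) *: y).

Definition dotrV (R : realType) (n : nat) (a x : 'rV[R]_n) : R :=
  \sum_(i < n) a ord0 i * x ord0 i.

(* f_T(x) = T log (sum_{k<K} exp(<alpha_k,x>/T + beta_k/T)),
   with K >= 1 terms (K.+1), real parameters. *)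
Definition LSE (R : realType) (n : nat) (T : R) (K : nat)
    (alpha : 'I_K.+1 -> 'rV[R]_n) (beta : 'I_K.+1 -> R) (x : 'rV[R]_n) : R :=
  T * ln (\sum_(k < K.+1) expR (dotrV (alpha k) x / T + beta k / T)).

Definition LSE_rat (R : realType) (n : nat) (T : R) (K : nat)
    (alpha : 'I_K.+1 -> 'rV[rat]_n) (beta : 'I_K.+1 -> rat) : 'rV[R]_n -> R :=
  LSE T (fun k => map_mx (@ratr R) (alpha k)) (fun k => ratr (beta k)).

(* f is in DLSE_T with rational parameters: f = g_T - h_T, g_T,h_T in LSE_T
   with rational parameters (T itself is given; rationality of T is asserted
   separately where relevant). *)
Definition DLSE_rat (R : realType) (n : nat) (T : R) (f : 'rV[R]_n -> R) : Prop :=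
  exists (K1 K2 : nat) (a1 : 'I_K1.+1 -> 'rV[rat]_n) (b1 : 'I_K1.+1 -> rat)
         (a2 : 'I_K2.+1 -> 'rV[rat]_n) (b2 : 'I_K2.+1 -> rat),
    forall x, f x = LSE_rat T a1 b1 x - LSE_rat T a2 b2 x.

(* Main.v *)
Require Import Defs.
From HB Require Import structures.
From mathcomp Require Import all_boot all_order all_algebra.
From mathcomp Require Import all_classical all_reals all_analysis.
From mathcomp Require Import ring lra.
From mathcomp Require Import finmap.
Set Implicit Arguments. Unset Strict Implicit.
Import Order.TTheory GRing.Theory Num.Theory.
Import numFieldNormedType.Exports.
Local Open Scope classical_set_scope.
Local Open Scope ring_scope.

Section ES.
Variables (R : realType) (n : nat) (P : R).

Definition ES (s : seq ('rV[rat]_n * rat)) (x : 'rV[R]_n) : R :=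
  \sum_(u <- s) expR (P * (dotrV (map_mx (@ratr R) u.1) x + ratr u.2)).

Definition esmul (s t : seq ('rV[rat]_n * rat)) :=
  [seq (u.1 + v.1, u.2 + v.2) | u <- s, v <- t].

Lemma dotrvD (a b x : 'rV[R]_n) : dotrV (a + b) x = dotrV a x + dotrV b x.
Proof. rewrite /dotrV -big_split /=; apply: eq_bigr => i _; by rewrite mxE mulrDl. Qed.

Lemma dotrv0 (x : 'rV[R]_n) : dotrV 0 x = 0.
Proof. rewrite /dotrV big1 // => i _; by rewrite mxE mul0r. Qed.

Lemma ES_cat s t x : ES (s ++ t) x = ES s x + ES t x.
Proof. by rewrite /ES big_cat. Qed.

Lemma ES_mul s t x : ES (esmul s t) x = ES s x * ES t x.
Proof.
rewrite /ES /esmul big_allpairs_dep /= mulr_suml; apply: eq_bigr => u _.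
rewrite mulr_sumr; apply: eq_bigr => v _ /=.
by rewrite -expRD map_mxD dotrvD rmorphD /=; congr expR; ring.
Qed.

Lemma ES_single a b x : ES [:: (a, b)] x = expR (P * (dotrV (map_mx (@ratr R) a) x + ratr b)).
Proof. by rewrite /ES big_seq1. Qed.

Lemma ES_const b x : ES [:: (0, b)] x = expR (P * ratr b).
Proof. by rewrite ES_single map_mx0 dotrv0 add0r. Qed.

Lemma ES_gt0 s x : s != [::] -> 0 < ES s x.
Proof.
case: s => [//|u s] _; rewrite /ES big_cons.
apply: ltr_pwDl; first exact: expR_gt0.
by apply: sumr_ge0 => i _; apply: ltW; apply: expR_gt0.
Qed.

Lemma esmul_nil s t : s != [::] -> t != [::] -> esmul s t != [::].
Proof. by case: s => // u s; case: t. Qed.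

Lemma LSE_ES (p : nat) s : P = p%:R -> (0 < p)%N -> s != [::] ->
  exists K (a : 'I_K.+1 -> 'rV[rat]_n) (b : 'I_K.+1 -> rat),
  forall x, LSE_rat (p%:R^-1) a b x = p%:R^-1 * ln (ES s x).
Proof.
move=> hP hp hs.
set K := (size s).-1.
have hK : size s = K.+1 by rewrite /K prednK // lt0n size_eq0.
exists K, (fun k => (nth (0,0) s k).1), (fun k => (nth (0,0) s k).2) => x.
rewrite /LSE_rat /LSE /ES; congr (_ * ln _).
rewrite (big_nth (0,0)) hK big_mkord; apply: eq_bigr => i _.
by rewrite invrK hP; congr expR; ring.
Qed.


Definition erow (j : 'I_n) (c : rat) : 'rV[rat]_n := \row_i (if i == j then c else 0).
Definition cone (d : 'rV[rat]_n) (L : rat) : seq ('rV[rat]_n * rat) :=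
  (0,0) :: [seq (erow j L, -(L * d ord0 j)) | j <- enum 'I_n]
         ++ [seq (erow j (-L), L * d ord0 j) | j <- enum 'I_n].

Lemma dot_erow j c (x : 'rV[R]_n) : dotrV (map_mx (@ratr R) (erow j c)) x = ratr c * x ord0 j.
Proof.
rewrite /dotrV (bigD1 j) //= big1 ?addr0 => [|i hij]; first by rewrite !mxE eqxx.
by rewrite !mxE (negbTE hij) rmorph0 mul0r.
Qed.

Definition cterm (d : 'rV[rat]_n) (L : rat) (x : 'rV[R]_n) j :=
  P * (ratr L * (x ord0 j - ratr (d ord0 j))).

Lemma ES_cone d L x : ES (cone d L) x =
  1 + \sum_j (expR (cterm d L x j) + expR (- cterm d L x j)).
Proof.
rewrite /ES big_cons map_mx0 dotrv0 rmorph0 addr0 mulr0 expR0; congr (_ + _).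
rewrite big_cat !big_map -enumT !big_enum big_split /=; congr (_ + _);
  apply: eq_bigr => j _; rewrite dot_erow /cterm; congr expR;
  rewrite ?rmorphN ?rmorphM /=; ring.
Qed.

Lemma cone_ge1 (d : 'rV[rat]_n) (L : rat) (x : 'rV[R]_n) : 1 <= ES (cone d L) x.
Proof.
rewrite ES_cone lerDl; apply: sumr_ge0 => j _.
by apply: addr_ge0; apply: ltW; apply: expR_gt0.
Qed.

Lemma cone_ge (d : 'rV[rat]_n) (L : rat) (x : 'rV[R]_n) (j : 'I_n) : 0 <= P -> 0 <= (ratr L : R) ->
  expR (P * (ratr L * `|x ord0 j - ratr (d ord0 j)|)) <= ES (cone d L) x.
Proof.
move=> hP hL; rewrite ES_cone (bigD1 j) //=.
have h0 : 0 <= \sum_(i < n | i != j) (expR (cterm d L x i) + expR (- cterm d L x i)).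
  by apply: sumr_ge0 => i _; apply: addr_ge0; apply: ltW; apply: expR_gt0.
have h1 := expR_gt0 (cterm d L x j). have h2 := expR_gt0 (- cterm d L x j).
suff : expR (P * (ratr L * `|x ord0 j - ratr (d ord0 j)|)) <=
   expR (cterm d L x j) + expR (- cterm d L x j) by lra.
rewrite /cterm; case: (lerP 0 (x ord0 j - ratr (d ord0 j))) => hs.
  rewrite ger0_norm //; lra.
rewrite ltr0_norm // mulrN mulrN; lra.
Qed.

Lemma cone_le (d : 'rV[rat]_n) (L : rat) (x : 'rV[R]_n) (s : R) : 0 <= P -> 0 <= (ratr L : R) -> 0 <= s ->
  (forall j, `|x ord0 j - ratr (d ord0 j)| <= s) ->
  ES (cone d L) x <= (2 * n + 1)%:R * expR (P * (ratr L * s)).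
Proof.
move=> hP hL hs0 hs.
have hE : forall j, expR (cterm d L x j) + expR (- cterm d L x j) <= 2 * expR (P * (ratr L * s)).
  move=> j; have hj := hs j.
  have hb : `|cterm d L x j| <= P * (ratr L * s).
    rewrite /cterm normrM (ger0_norm hP); apply: ler_wpM2l => //.
    by rewrite normrM (ger0_norm hL); apply: ler_wpM2l.
  have ha : cterm d L x j <= P * (ratr L * s) by apply: le_trans (ler_norm _) hb.
  have hn : - cterm d L x j <= P * (ratr L * s).
    by apply: le_trans hb; rewrite -normrN ler_norm.
  rewrite -ler_expR in ha; rewrite -ler_expR in hn; lra.
rewrite ES_cone.
have hS : \sum_j (expR (cterm d L x j) + expR (- cterm d L x j)) <=
    \sum_(j < n) (2 * expR (P * (ratr L * s))) by apply: ler_sum => j _; exact: hE j.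
rewrite sumr_const card_ord -mulr_natr in hS.
have h1 : 1 <= expR (P * (ratr L * s)).
  by rewrite -expR0 ler_expR; apply: mulr_ge0 => //; apply: mulr_ge0.
have hn : 0 <= n%:R :> R by rewrite ler0n.
rewrite natrD natrM; nra.
Qed.


Lemma softmin_rep (A : Type) (cs : seq A) (w : A -> rat)
  (S : A -> seq ('rV[rat]_n * rat)) (b0 : rat) :
  (forall a, S a != [::]) ->
  exists N Dn, N != [::] /\ Dn != [::] /\ forall x,
    ES N x / ES Dn x = expR (P * ratr b0) +
       \sum_(a <- cs) expR (P * ratr (w a)) / ES (S a) x.
Proof.
move=> hS; elim: cs => [|a cs [N [Dn [hN [hD IH]]]]].
  exists [:: (0, b0)], [:: (0, 0)]; split => //; split => // x.
  by rewrite big_nil !ES_const rmorph0 mulr0 expR0 divr1 addr0.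
exists (esmul N (S a) ++ esmul [:: (0, w a)] Dn), (esmul Dn (S a)).
split; first by have := esmul_nil hN (hS a); case: (esmul N (S a)).
split; first exact: esmul_nil.
move=> x; rewrite big_cons ES_cat !ES_mul ES_const.
have h1 : 0 < ES Dn x by apply: ES_gt0.
have h2 : 0 < ES (S a) x by apply: ES_gt0.
have -> : expR (P * ratr b0) + (expR (P * ratr (w a)) / ES (S a) x +
    \sum_(j <- cs) expR (P * ratr (w j)) / ES (S j) x) =
    ES N x / ES Dn x + expR (P * ratr (w a)) / ES (S a) x by rewrite IH; ring.
field; apply/andP; split; exact: lt0r_neq0.
Qed.

End ES.
Section T.
Variables (R : realType) (n : nat).

Lemma ballP (c y : 'rV[R]_n) (e : R) : ball c e y -> forall j, `|c ord0 j - y ord0 j| < e.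
Proof. move=> [_ h] j; have := h ord0 j. by rewrite /ball /=. Qed.

Lemma ballP2 (c y : 'rV[R]_n) (e : R) : 0 < e -> (forall j, `|c ord0 j - y ord0 j| < e) -> ball c e y.
Proof. move=> he h; split => // i j; rewrite /ball /= (ord1 i); exact: h. Qed.

Lemma cont_ball (K : set 'rV[R]_n) (phi : 'rV[R]_n -> R) c e :
  {within K, continuous phi} -> K c -> 0 < e ->
  exists2 d : R, 0 < d & forall y, K y -> (forall j, `|c ord0 j - y ord0 j| < d) -> `|phi c - phi y| < e.
Proof.
move=> hc Kc he.
have := (subspace_continuousP K phi).1 hc c Kc.
move=> /cvgrPdist_lt /(_ e he).
rewrite /prop_near1 /within /= => /nbhs_ballP [d dpos Hd].
exists d => // y Ky hy; apply: Hd => //; exact: ballP2.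
Qed.

Lemma phi_bounded (K : set 'rV[R]_n) (phi : 'rV[R]_n -> R) :
  {within K, continuous phi} -> compact K ->
  exists B : nat, forall y, K y -> `|phi y| + 1 <= B%:R.
Proof.
move=> hc hK.
have := compact_bounded (continuous_compact hc hK).
move=> [M [_ HM]].
have hM1 : M + 1 > M by lra.
have := HM _ hM1 => HB.
exists (Num.Def.archi_bound (`|M| + 2)) => y Ky.
have h1 := HB (phi y) (ex_intro2 _ _ y Ky erefl).
have h2 := archi_boundP (x := `|M| + 2) ltac:(by apply: addr_ge0).
rewrite /= in h1; have := ler_norm M; lra.
Qed.

Lemma rat_approx (x e : R) : 0 < e -> exists q : rat, `|x - ratr q| < e.
Proof.
move=> he; have [q] := @rat_in_itvoo R (x - e) (x + e) ltac:(lra).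
rewrite in_itv /= => /andP [h1 h2]; exists q; rewrite ltr_norml; apply/andP; split; lra.
Qed.

End T.

Lemma sum_ge_mem (R : realType) (A : eqType) (s : seq A) (F : A -> R) a :
  (forall b, 0 <= F b) -> a \in s -> F a <= \sum_(b <- s) F b.
Proof.
move=> h0; elim: s => [//|b s IH]; rewrite in_cons big_cons => /orP [/eqP ->|ha].
  by rewrite lerDl; apply: sumr_ge0.
by apply: le_trans (IH ha) _; rewrite lerDr.
Qed.

Lemma sum_le_const (R : realType) (A : eqType) (s : seq A) (F : A -> R) E :
  (forall b, b \in s -> F b <= E) -> \sum_(b <- s) F b <= (size s)%:R * E.
Proof.
elim: s => [|b s IH] h; first by rewrite big_nil mul0r.
rewrite big_cons /= -addn1 natrD mulrDl mul1r addrC; apply: lerD.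
  by apply: IH => c hc; apply: h; rewrite in_cons hc orbT.
by apply: h; rewrite in_cons eqxx.
Qed.

Unset Implicit Arguments.

Theorem theorem2 (R : realType) (n : nat) (Kset : set 'rV[R]_n)
    (phi : 'rV[R]_n -> R) :
  compact Kset -> convex_set_rV Kset -> {within Kset, continuous phi} ->
  forall eps : R, 0 < eps ->
  exists (p : nat) (f : 'rV[R]_n -> R),
    (0 < p)%N /\ DLSE_rat (p%:R^-1) f /\
    forall x, Kset x -> `|f x - phi x| <= eps.
Proof.
move=> hK _ hc.
suff main : forall eps : R, 0 < eps -> eps <= 1 -> exists (p : nat) (f : 'rV[R]_n -> R),
    (0 < p)%N /\ DLSE_rat (p%:R^-1) f /\
    forall x, Kset x -> `|f x - phi x| <= eps.
  move=> eps he.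
  have he' : 0 < Num.min eps 1 by rewrite lt_min he ltr01.
  have [p [f [hp [hf hb]]]] := main _ he' ltac:(by rewrite ge_min lexx orbT).
  exists p, f; split => //; split => // x Kx; apply: le_trans (hb x Kx) _.
  by rewrite ge_min lexx.
move=> eps he he1.
have [B0 HB0] := @phi_bounded _ _ _ _ hc hK.
set B := B0.+1.
have HB : forall y, Kset y -> `|phi y| + 1 <= B%:R.
  move=> y Ky; apply: le_trans (HB0 y Ky) _; by rewrite ler_nat /B leqnSn.
have hB1 : (1 : R) <= B%:R by rewrite ler1n.
set M : rat := (2 * B)%:R.
have hM : (ratr M : R) = 2 * B%:R by rewrite ratr_nat natrM.
pose I := ('rV[rat]_n * rat * rat)%type.
pose good (i : I) : Prop := 0 < i.1.2 /\ - (B%:R : R) <= ratr i.2 /\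
  forall y, Kset y -> (forall j, `|y ord0 j - ratr (i.1.1 ord0 j)| < ratr i.1.2) ->
     `|phi y - ratr i.2| <= eps / 8.
pose rho (i : I) : R := eps * ratr i.1.2 / (8 * ratr M).
pose U (i : I) : set 'rV[R]_n := ball (map_mx (@ratr R) i.1.1) (rho i).
have hsub : Kset `<=` cover good U.
  move=> c Kc.
  have he16 : 0 < eps / 16 by lra.
  have [del hdel Hdel] := @cont_ball _ _ _ _ _ _ hc Kc he16.
  have [r] := @rat_in_itvoo R 0 (del / 2) ltac:(lra).
  rewrite in_itv /= => /andP [hr0 hr1].
  set rr := (ratr r : R) in hr0 hr1.
  have hrho : 0 < eps * rr / (8 * ratr M).
    by rewrite hM; apply: divr_gt0; [apply: mulr_gt0 | lra].
  have hrho2 : eps * rr / (8 * ratr M) <= rr.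
    rewrite hM ler_pdivrMr; last by lra.
    nra.
  have [g hg] := choice (fun j : 'I_n => @rat_approx R (c ord0 j) _ hrho).
  have [q hq] := @rat_approx R (phi c) _ he16.
  exists ((\row_j g j, r), q).
    split; first by rewrite -(ltr0q R).
    split.
      have h1 := HB c Kc; rewrite /= ltr_norml in hq; case/andP: hq => hq1 hq2.
      have h3 : - phi c <= `|phi c| by rewrite -normrN ler_norm.
      lra.
    move=> y Ky hy /=.
    have hcy : forall j, `|c ord0 j - y ord0 j| < del.
      move=> j; have := hy j; have := hg j; rewrite /= mxE => h1 h2.
      have := ler_normD (c ord0 j - ratr (g j)) (ratr (g j) - y ord0 j).
      rewrite -distrC in h2.
      have -> : c ord0 j - ratr (g j) + (ratr (g j) - y ord0 j) = c ord0 j - y ord0 j by ring.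
      rewrite /rr in hr0 hr1 hrho2; lra.
    have h1 := Hdel y Ky hcy; rewrite distrC in h1.
    have := ler_normD (phi y - phi c) (phi c - ratr q).
    have -> : phi y - phi c + (phi c - ratr q) = phi y - ratr q by ring.
    lra.
  apply: ballP2 => //= j; rewrite !mxE distrC; exact: hg j.
have hopen : forall i, good i -> open (U i) by move=> i _; exact: ball_open.
have := hK; rewrite compact_cover => /(_ I good U hopen hsub) [D' hD' hcov].
set cs : seq I := enum_fset D'.
set N0 : nat := (2 * n + 1 + size cs + 1)%N.
set p : nat := (Num.Def.archi_bound (2 * N0%:R / eps)).+1.
have hp : (0 < p)%N by [].
set P : R := p%:R.
have hP : 0 < P by rewrite /P ltr0n.
have hPN : N0%:R <= P * eps / 2.
  have h := archi_boundP (x := 2 * N0%:R / eps) ltac:(apply: divr_ge0; [apply: mulr_ge0 => //; rewrite ler0n | exact: ltW]).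
  have h2 : 2 * N0%:R / eps < P.
    apply: lt_le_trans h _; rewrite /P /p ler_nat; exact: leqnSn.
  rewrite ltr_pdivrMr // in h2; lra.
have [N [Dn [hN [hDn HND]]]] := @softmin_rep R n P I cs (fun i : I => - i.2)
   (fun i : I => cone i.1.1 (M / i.1.2)) (- (B%:R)) (fun i => erefl).
exists p, (fun x => P^-1 * ln (ES P Dn x) - P^-1 * ln (ES P N x)).
split => //; split.
  have [K1 [a1 [b1 h1]]] := LSE_ES (erefl P) hp hDn.
  have [K2 [a2 [b2 h2]]] := LSE_ES (erefl P) hp hN.
  by exists K1, K2, a1, b1, a2, b2 => x; rewrite h1 h2.
move=> x Kx.
have hNx : 0 < ES P N x by apply: ES_gt0.
have hDx : 0 < ES P Dn x by apply: ES_gt0.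
set Sg := ES P N x / ES P Dn x.
have hSg : 0 < Sg by apply: divr_gt0.
have hf : P^-1 * ln (ES P Dn x) - P^-1 * ln (ES P N x) = - (P^-1 * ln Sg).
  rewrite /Sg lnM ?posrE ?invr_gt0 // lnV ?posrE //; ring.
rewrite hf.
have HS := HND x; rewrite -/Sg in HS.
have hgoodcs : forall a, a \in cs -> good a by move=> a ha; move: (hD' a ha); rewrite in_setE.
have hphi : phi x + 1 <= B%:R by have := HB x Kx; have := ler_norm (phi x); lra.
have hexp : forall k : nat, (k <= N0)%N -> k%:R <= expR (P * eps / 2).
  move=> k hk; apply: le_trans (expR_ge1Dx _).
  have hk' : k%:R <= N0%:R :> R by rewrite ler_nat.
  lra.
set E := expR (- (P * (phi x - eps / 8))).
have hterm : forall a, a \in cs ->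
    expR (P * ratr (- a.2)) / ES P (cone a.1.1 (M / a.1.2)) x <= E.
  move=> a ha; have [hr [hq hgood]] := hgoodcs a ha.
  have hS : 0 < ES P (cone a.1.1 (M / a.1.2)) x by apply: ES_gt0.
  rewrite ler_pdivrMr //.
  suff hSl : expR (P * (phi x - eps/8 - ratr a.2)) <= ES P (cone a.1.1 (M / a.1.2)) x.
    have := ler_wpM2l (ltW (expR_gt0 (-(P*(phi x - eps/8))))) hSl.
    rewrite /E -expRD.
    have -> : -(P*(phi x - eps/8)) + P*(phi x - eps/8 - ratr a.2) = P * ratr (- a.2).
      by rewrite rmorphN; ring.
    done.
  have hr' : (0 : R) < ratr a.1.2 by rewrite ltr0q.
  case: (boolP [forall j, `|x ord0 j - ratr (a.1.1 ord0 j)| < (ratr a.1.2 : R)]) => [/forallP hall | /forallPn [j hj]].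
    have h1 : 1 <= ES P (cone a.1.1 (M / a.1.2)) x by apply: cone_ge1.
    apply: le_trans h1; rewrite -[X in _ <= X]expR0 ler_expR.
    have := hgood x Kx hall; rewrite ler_norml => /andP [h2 h3].
    nra.
  rewrite -leNgt in hj.
  have hL : (0 : R) <= ratr (M / a.1.2) by rewrite fmorph_div /= hM; apply: divr_ge0; lra.
  apply: le_trans _ (@cone_ge R n P a.1.1 (M / a.1.2) x j (ltW hP) hL); rewrite ler_expR; apply: ler_wpM2l; first exact: ltW.
  have h4 := ler_wpM2l hL hj.
  have h5 : ratr (M / a.1.2) * ratr a.1.2 = 2 * B%:R :> R.
    by rewrite fmorph_div /= hM; field; apply: lt0r_neq0.
  lra.
have hlow : Sg <= expR (- (P * (phi x - 5 * eps / 8))).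
  rewrite HS.
  have h1 := sum_le_const hterm.
  have h0 : expR (P * ratr (- (B%:R : rat))) <= E.
    rewrite /E ler_expR rmorphN rmorph_nat; nra.
  have hs : ((size cs).+1)%:R <= expR (P * eps / 2) by apply: hexp; rewrite /N0 addn1 ltnS leq_addl.
  have hE : 0 <= E by apply: ltW; apply: expR_gt0.
  have -> : expR (- (P * (phi x - 5 * eps / 8))) = expR (P * eps / 2) * E.
    by rewrite /E -expRD; congr expR; field.
  have := ler_wpM2r hE hs; rewrite -addn1 natrD; nra.
have [i hi hU] := hcov x Kx.
have [hr [hq hgood]] := hgoodcs i hi.
have hr' : (0 : R) < ratr i.1.2 by rewrite ltr0q.
have hrho0 : 0 < rho i by rewrite /rho hM; apply: divr_gt0; [apply: mulr_gt0 | lra].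
have hrho1 : rho i <= ratr i.1.2.
  rewrite /rho hM ler_pdivrMr; last by lra.
  nra.
have hxd : forall j, `|x ord0 j - ratr (i.1.1 ord0 j)| < rho i.
  move=> j; have := ballP hU j; rewrite mxE distrC //.
have hL : (0 : R) <= ratr (M / i.1.2) by rewrite fmorph_div /= hM; apply: divr_ge0; lra.
have hSle := @cone_le R n P i.1.1 (M / i.1.2) x (rho i) (ltW hP) hL (ltW hrho0) (fun j => ltW (hxd j)).
have hLr : ratr (M / i.1.2) * rho i = eps / 8 :> R.
  rewrite /rho fmorph_div /= hM; field; apply/andP; split; [apply: lt0r_neq0 => //|]; lra.
rewrite hLr in hSle.
have hqx : ratr i.2 <= phi x + eps / 8.
  have := hgood x Kx (fun j => lt_le_trans (hxd j) hrho1).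
  rewrite ler_norml => /andP [h2 h3]; lra.
set F := expR (- (P * (phi x + 3 * eps / 4))).
have hS : 0 < ES P (cone i.1.1 (M / i.1.2)) x by apply: ES_gt0.
have hup1 : F <= expR (P * ratr (- i.2)) / ES P (cone i.1.1 (M / i.1.2)) x.
  rewrite ler_pdivlMr //.
  have hF : 0 <= F by apply: ltW; apply: expR_gt0.
  apply: le_trans (ler_wpM2l hF hSle) _.
  have hs : (2 * n + 1)%:R <= expR (P * eps / 2) by apply: hexp; rewrite /N0 -addnA leq_addr.
  have he8 : 0 <= expR (P * (eps / 8)) by apply: ltW; apply: expR_gt0.
  apply: le_trans (ler_wpM2l hF (ler_wpM2r he8 hs)) _.
  rewrite /F -!expRD ler_expR rmorphN; nra.
have hup : F <= Sg.
  apply: le_trans hup1 _; rewrite HS.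
  have := @sum_ge_mem R _ cs (fun a : I => expR (P * ratr (- a.2)) / ES P (cone a.1.1 (M / a.1.2)) x) i.
  move=> /(_ _ hi) h.
  have : expR (P * ratr (- i.2)) / ES P (cone i.1.1 (M / i.1.2)) x <=
    \sum_(a <- cs) expR (P * ratr (- a.2)) / ES P (cone a.1.1 (M / a.1.2)) x.
    apply: h => b; apply: divr_ge0; [apply: ltW; apply: expR_gt0 | by apply/ltW/ES_gt0].
  move=> h2; apply: le_trans h2 _; rewrite lerDr; apply: ltW; apply: expR_gt0.
have hl1 : ln Sg <= - (P * (phi x - 5 * eps / 8)).
  by rewrite -[X in _ <= X]expRK ler_ln ?posrE ?expR_gt0.
have hl2 : - (P * (phi x + 3 * eps / 4)) <= ln Sg.
  by rewrite -[X in X <= _]expRK ler_ln ?posrE ?expR_gt0.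
have hPi : P^-1 * P = 1 by rewrite mulVf // lt0r_neq0.
have hPi0 : 0 < P^-1 by rewrite invr_gt0.
have h1 := ler_wpM2l (ltW hPi0) hl1.
have h2 := ler_wpM2l (ltW hPi0) hl2.
have e1 : P^-1 * - (P * (phi x - 5 * eps / 8)) = - (phi x - 5 * eps / 8).
  by rewrite mulrN mulrA hPi mul1r.
have e2 : P^-1 * - (P * (phi x + 3 * eps / 4)) = - (phi x + 3 * eps / 4).
  by rewrite mulrN mulrA hPi mul1r.
rewrite e1 in h1; rewrite e2 in h2.
rewrite ler_norml; apply/andP; split; lra.
Qed.
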